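(* Fix $\widehat\Sigma\subseteq\Sigma$ and a deck $\beta_1,\ldots,\beta_B\in\mathscr{B}$. Let $\sigma\in\Sigma$ satisfy $T^\sigma(\beta_1,\ldots,\beta_B)=T^*(\beta_1,\ldots,\beta_B)$. Let $\mathscr{K}^\sigma_1,\ldots,\mathscr{K}^\sigma_{K^\sigma}$ be the connected components of the graph $\mathscr{G}^\sigma$. For each $k\in\{1,\ldots,K^\sigma\}$ define $\sigma_k:\mathcal{N}\to\mathcal{N}$ by $\sigma_k(i)=\sigma(i)$ if $i\in\mathcal{N}_c$ with $c\in\mathscr{K}^\sigma_k$, and $\sigma_k(i)=i$ otherwise. Then each $\sigma_k$ belongs to $\Sigma$ and satisfies $T^{\sigma_k}(\beta_1,\ldots,\beta_B)=T^*(\beta_1,\ldots,\beta_B)$, and $\bigcup_{k=1}^{K^\sigma}\mathscr{F}(\widehat\Sigma\cup\{\sigma_k\})=\mathscr{F}(\widehat\Sigma\cup\{\sigma\})$.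
   Context: A ballot style consists of contests $\mathcal{C}=\{1,\ldots,C\}$, candidates $\mathcal{N}=\{1,\ldots,N\}$ partitioned into nonempty sets $\mathcal{N}_c$ ($c\in\mathcal{C}$), and positive integers $v_c$. A filled-out ballot is a subset $\beta\subseteq\mathcal{N}$; $\mathscr{B}=\{\beta\subseteq\mathcal{N}: |\mathcal{N}_c\cap\beta|\le v_c\ \forall c\}$. For $i\in\mathcal{N}_c$: $T^*_i(\beta_1,\ldots,\beta_B)=\sum_{b=1}^B\mathbb{I}\{i\in\beta_b\text{ and }|\mathcal{N}_c\cap\beta_b|\le v_c\}$, and for a bijection $\sigma$ of $\mathcal{N}$, $T^\sigma_i(\beta_1,\ldots,\beta_B)=\sum_{b=1}^B\mathbb{I}\{\sigma(i)\in\beta_b\text{ and }|\{\sigma(j)\in\beta_b: j\in\mathcal{N}_c\}|\le v_c\}$. $\Sigma$ is the set of non-identity bijections $\mathcal{N}\to\mathcal{N}$. For $\widehat\Sigma\subseteq\Sigma$, $\mathscr{F}(\widehat\Sigma)$ is the set of all tuples $(\beta_1,\ldots,\beta_{B'})$, over all $B'\in\mathbb{N}$, with each $\beta_b\in\mathscr{B}$ and $T^{\tau}(\beta_1,\ldots,\beta_{B'})\neq T^*(\beta_1,\ldots,\beta_{B'})$ for all $\tau\in\widehat\Sigma$. For $\sigma\in\Sigma$, $\mathscr{G}^\sigma=(\mathscr{V}^\sigma,\mathscr{E}^\sigma)$ is the undirected graph with vertex set $\mathscr{V}^\sigma=\{c\in\mathcal{C}:\exists i\in\mathcal{N}_c,\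 \sigma(i)\neq i\}$ and edge set $\mathscr{E}^\sigma=\{(c,c'): \exists i\in\mathcal{N}_c, i'\in\mathcal{N}_{c'}\text{ with }\sigma(i)=i'\text{ or }\sigma(i')=i\}$. *)

(* Defs.v *)
From mathcomp Require Import all_boot all_fingroup.
Set Implicit Arguments. Unset Strict Implicit. Unset Printing Implicit Defensive.

(* Candidates N = 'I_N, contests C = 'I_C.  The partition (N_c)_c is given by
   con : 'I_N -> 'I_C (N_c = con^-1(c)); nonemptiness is a hypothesis.
   A filled-out ballot is a {set 'I_N}; a deck is a seq of ballots. *)

Section Defs.
Variables (N C : nat) (con : 'I_N -> 'I_C) (v : 'I_C -> nat).

Definition valid_ballot (b : {set 'I_N}) : bool :=
  [forall c : 'I_C, #|[set j in b | con j == c]| <= v c].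

Definition Tstar (d : seq {set 'I_N}) : {ffun 'I_N -> nat} :=
  [ffun i => \sum_(b <- d)
     ((i \in b) && (#|[set j in b | con j == con i]| <= v (con i)))%N].

Definition Tsig (f : 'I_N -> 'I_N) (d : seq {set 'I_N}) : {ffun 'I_N -> nat} :=
  [ffun i => \sum_(b <- d)
     ((f i \in b) && (#|[set j | (con j == con i) && (f j \in b)]| <= v (con i)))%N].

Definition inF (S : ('I_N -> 'I_N) -> Prop) (d : seq {set 'I_N}) : Prop :=
  all valid_ballot d /\ (forall f, S f -> Tsig f d <> Tstar d).

Definition addS (Sh : {set {perm 'I_N}}) (f : 'I_N -> 'I_N) : ('I_N -> 'I_N) -> Prop :=
  fun g => (exists2 t, t \in Sh & g =1 t) \/ g =1 f.

Definition Gvert (s : {perm 'I_N}) : {set 'I_C} :=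
  [set c | [exists i, (con i == c) && (s i != i)]].

Definition Gedge (s : {perm 'I_N}) : rel 'I_C :=
  fun c c' => [exists i, exists i',
    [&& con i == c, con i' == c' & (s i == i') || (s i' == i)]].

Definition Gadj (s : {perm 'I_N}) : rel 'I_C :=
  fun c c' => [&& c \in Gvert s, c' \in Gvert s & Gedge s c c'].

Definition comp (s : {perm 'I_N}) (c : 'I_C) : {set 'I_C} :=
  [set c' | (c' \in Gvert s) && connect (Gadj s) c c'].

Definition components (s : {perm 'I_N}) : {set {set 'I_C}} :=
  [set comp s c | c in Gvert s].

Definition sigmaK (s : {perm 'I_N}) (K : {set 'I_C}) : 'I_N -> 'I_N :=
  fun i => if con i \in K then s i else i.

End Defs.

(* Main.v *)
Require Import Defs.
From mathcomp Require Import all_boot all_fingroup.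

Section Aux.
Variables (N C : nat) (con : 'I_N -> 'I_C) (v : 'I_C -> nat).

Lemma Tsig_local (f g : 'I_N -> 'I_N) d i :
  (forall j, con j = con i -> f j = g j) -> Tsig con v f d i = Tsig con v g d i.
Proof.
move=> H; rewrite !ffunE; apply: eq_bigr => b _.
rewrite (H i erefl); congr (_ && (_ <= _)).
apply: eq_card => j; rewrite !inE; by case: eqP => //= /H ->.
Qed.

Lemma Tsig_id d : Tsig con v id d = Tstar con v d.
Proof.
apply/ffunP => i; rewrite !ffunE; apply: eq_bigr => b _.
by congr (_ && (_ <= _)); apply: eq_card => j; rewrite !inE andbC.
Qed.

Lemma Tsig_ext (f g : 'I_N -> 'I_N) d : f =1 g -> Tsig con v f d = Tsig con v g d.
Proof. by move=> H; apply/ffunP => i; apply: Tsig_local => j _; apply: H. Qed.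

Lemma Tsig_out (s : {perm 'I_N}) d i : con i \notin Gvert con s ->
  Tsig con v s d i = Tstar con v d i.
Proof.
move=> Hi; rewrite -Tsig_id; apply: Tsig_local => j Hj.
apply/eqP; apply: contraNT Hi => Hsj; rewrite inE; apply/existsP; exists j.
by rewrite Hj eqxx.
Qed.

Lemma Tsig_sK (s : {perm 'I_N}) K d i :
  Tsig con v (sigmaK con s K) d i =
  if con i \in K then Tsig con v s d i else Tstar con v d i.
Proof.
case: ifP => Hi.
  by apply: Tsig_local => j Hj; rewrite /sigmaK Hj Hi.
rewrite -Tsig_id; apply: Tsig_local => j Hj; by rewrite /sigmaK Hj Hi.
Qed.

Lemma Tsig_sK_eq (s : {perm 'I_N}) K d :
  Tsig con v s d = Tstar con v d -> Tsig con v (sigmaK con s K) d = Tstar con v d.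
Proof. by move=> H; apply/ffunP => i; rewrite Tsig_sK H; case: ifP. Qed.

Lemma comp_closed (s : {perm 'I_N}) (c0 c c' : 'I_C) :
  c \in Defs.comp con s c0 -> Gadj con s c c' -> c' \in Defs.comp con s c0.
Proof.
rewrite [c \in _]inE => /andP [_ Hc] Hadj.
have Hv : c' \in Gvert con s by case/and3P: Hadj.
rewrite [c' \in _]inE; apply/andP; split => //; apply: connect_trans Hc (connect1 Hadj).
Qed.

Lemma comp_self (s : {perm 'I_N}) (c : 'I_C) : c \in Gvert con s -> c \in Defs.comp con s c.
Proof. by move=> H; rewrite [c \in _]inE H connect0. Qed.

Lemma comp_sub (s : {perm 'I_N}) (c0 c : 'I_C) : c \in Defs.comp con s c0 -> c \in Gvert con s.
Proof. by rewrite [c \in _]inE => /andP []. Qed.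

Lemma sK_inj (s : {perm 'I_N}) (c0 : 'I_C) : injective (sigmaK con s (Defs.comp con s c0)).
Proof.
set K := Defs.comp con s c0.
have key : forall i j, con i \in K -> con j \notin K -> s i <> j.
  move=> i j Hi Hj Hsij; apply: (negP Hj).
  have Hij : i != j by apply: contraNneq Hj => <-.
  have Hvj : con j \in Gvert con s.
    rewrite inE; apply/existsP; exists j; rewrite eqxx /=.
    by apply/eqP => Hsj; move/eqP: Hij; apply; apply: (@perm_inj _ s); rewrite Hsj.
  have Hi' := comp_sub _ _ _ Hi.
  apply: (comp_closed _ _ _ _ Hi); rewrite /Gadj Hi' Hvj /=.
  by apply/existsP; exists i; apply/existsP; exists j; rewrite !eqxx Hsij eqxx.
move=> i j; rewrite /sigmaK.
case Hi: (con i \in K); case Hj: (con j \in K).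
- exact: perm_inj.
- by move=> /= H; exfalso; apply: (key i j) H; rewrite ?Hi ?Hj.
- by move=> /= H; exfalso; apply: (key j i) (esym H); rewrite ?Hi ?Hj.
- by [].
Qed.

Lemma main_iff (s : {perm 'I_N}) d :
  Tsig con v s d <> Tstar con v d <->
  exists2 K, K \in components con s & Tsig con v (sigmaK con s K) d <> Tstar con v d.
Proof.
split.
  move=> H.
  have [i Hi] : exists i, Tsig con v s d i != Tstar con v d i.
    apply/existsP; apply: contra_notT H => /existsPn Hn.
    by apply/ffunP => i; apply/eqP; have := Hn i; rewrite negbK.
  have Hv : con i \in Gvert con s.
    by apply: contraNT Hi => /Tsig_out ->.
  exists (Defs.comp con s (con i)); first by apply/imsetP; exists (con i).
  move/ffunP => E; move: (E i); rewrite Tsig_sK comp_self //.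
  by move/eqP; rewrite (negbTE Hi).
by case=> K _ HK HT; apply: HK; apply: Tsig_sK_eq.
Qed.

End Aux.

Theorem theorem2 (N C : nat) (con : 'I_N -> 'I_C) (v : 'I_C -> nat)
  (Hcon : forall c : 'I_C, exists i : 'I_N, con i = c)
  (Hv : forall c : 'I_C, 0 < v c)
  (Sh : {set {perm 'I_N}}) (HSh : 1%g \notin Sh)
  (d : seq {set 'I_N}) (Hd : all (valid_ballot con v) d)
  (s : {perm 'I_N}) (Hs : s != 1%g)
  (HT : Tsig con v s d = Tstar con v d) :
  (forall K, K \in components con s ->
     [/\ injective (sigmaK con s K), (exists i, sigmaK con s K i != i)
       & Tsig con v (sigmaK con s K) d = Tstar con v d])
  /\
  (forall d' : seq {set 'I_N},
     (exists2 K, K \in components con s & inF con v (addS Sh (sigmaK con s K)) d')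
     <-> inF con v (addS Sh s) d').
Proof.
split.
  move=> K /imsetP [c Hc ->]; split.
  - exact: sK_inj.
  - move: Hc; rewrite inE => /existsP [i /andP [/eqP Hi Hsi]].
    by exists i; rewrite /sigmaK Hi comp_self // inE; apply/existsP; exists i;
       rewrite Hi eqxx.
  - exact: Tsig_sK_eq.
move=> d'; split.
  case=> K HK [Hall HF]; split => // f [[t Ht Hft]|Hf].
    by apply: HF; left; exists t.
  rewrite (@Tsig_ext N C con v _ _ _ Hf); apply/(@main_iff N C con v s d'); exists K => //.
  by apply: HF; right.
case=> Hall HF.
have Hs' : Tsig con v s d' <> Tstar con v d' by apply: HF; right.
case/main_iff: Hs' => K HK HKn; exists K => //; split => // f [[t Ht Hft]|Hf].
  by apply: HF; left; exists t.
by rewrite (@Tsig_ext N C con v _ _ _ Hf).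
Qed.
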